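(* Fix an integer $m>1$, $L>0$, $T>0$, put $h=L/m$, and let weights $w_0=0$, $w_1,\dots,w_{m-1}$ be given such that the matrix $M^*$ defined below is invertible. Let $F\in\mathbb{R}^{m-1}$ and $(U^0,V^0)\in\mathbb{R}^{m-1}\times\mathbb{R}^{m-1}$ be given, and let $\mathcal{U}_h=(U_h,V_h)\in \mathrm{C}^1([0,T];\mathbb{R}^{m-1}\times\mathbb{R}^{m-1})$ be the solution of $$\mathcal{U}_h'(t)=G(\mathcal{U}_h(t)),\quad t\in[0,T],\qquad \mathcal{U}_h(0)=(U^0,V^0),$$ where for $\mathcal{U}=(U,V)$ with $U=(u_1,\dots,u_{m-1})^{\mathsf T}$, $$G(\mathcal{U})=\Big(\tfrac1h (M^* )^{-1}V,\; -\tfrac1h S^*U+F+\tfrac1h u_1^+e_1\Big).$$ For $N\in\mathbb{N}$ set $\Delta t=T/N$, $t_n=n\Delta t$, and call a sequence $(\mathcal{U}^n)_{n=0}^N$ a Crank–Nicolson sequence if $\mathcal{U}^0=\mathcal{U}_h(0)$ and $$\frac{\mathcal{U}^{n+1}-\mathcal{U}^n}{\Delta t}=\frac12\big(G(\mathcal{U}^{n+1})+G(\mathcal{U}^n)\big),\qquad n=0,\dots,N-1.$$ Then the time discretization error of the Crank–Nicolson method is of order $\Delta t$: there exist constants $\delta>0$ and $K>0$ (which may depend on $h$, $T$ and the data, but not on $\Delta t$) such that for every $N$ with $\Delta t=T/N<\delta$ and every Crank–Nicolson sequence $(\mathcal{U}^n)$, $$\max_{0\le n\le N}\|\mathcal{U}_h(t_n)-\mathcal{U}^n\|\le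 K\,\Delta t .$$
   Context: $\|\cdot\|$ is the Euclidean norm on $\mathbb{R}^{m-1}\times\mathbb{R}^{m-1}$, $s^+=\max(s,0)$, $e_1=(1,0,\dots,0)^{\mathsf T}\in\mathbb{R}^{m-1}$. Hat functions on $[0,L]$ with nodes $kh$: $\varphi_0(x)=1-x/h$ on $[0,h)$ and $0$ for $x\ge h$; for $k=1,\dots,m-1$, $\varphi_k(x)=x/h-k+1$ on $[(k-1)h,kh)$, $k+1-x/h$ on $[kh,(k+1)h)$, $0$ otherwise. The weight function is $w_h(x)=w_j$ for $x\in[jh,(j+1)h)$, $j=0,\dots,m-1$ (with $w_0=0$). The matrices $M^*,S^*\in\mathbb{R}^{(m-1)\times(m-1)}$ are given for $i,k=1,\dots,m-1$ by $M^*_{ik}=\frac1h\int_0^L\varphi_i\varphi_k w_h\,dx$ and $S^*_{ik}=h\int_0^L\varphi_i'\varphi_k'\,dx$. (This ODE is the reformulation of the spatially semi-discrete mass-redistributed contact problem for the 1D wave equation, after elimination of the contact node via $u_0=u_1^+$.) *)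

(* Defs.v *)
From HB Require Import structures.
From mathcomp Require Import all_boot all_order all_algebra.
From mathcomp Require Import all_classical all_reals all_analysis.
Unset Printing Implicit Defensive.
Import Order.TTheory GRing.Theory Num.Theory.
Import numFieldNormedType.Exports.
Local Open Scope classical_set_scope.
Local Open Scope ring_scope.

Section Defs.
Context {R : realType}.

Definition hat (h : R) (k : nat) (x : R) : R :=
  if k is 0%N then (if (0 <= x) && (x < h) then 1 - x / h else 0)
  else if ((k%:R - 1) * h <= x) && (x < k%:R * h) then x / h - k%:R + 1
  else if (k%:R * h <= x) && (x < (k%:R + 1) * h) then k%:R + 1 - x / h
  else 0.

(* The (a.e.) derivative of hat h k for k >= 1, written out piecewise. *)
Definition dhat (h : R) (k : nat) (x : R) : R :=
  if ((k%:R - 1) * h <= x) && (x < k%:R * h) then h^-1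
  else if (k%:R * h <= x) && (x < (k%:R + 1) * h) then - h^-1
  else 0.

Definition wh (m : nat) (h : R) (w : nat -> R) (x : R) : R :=
  \sum_(j < m) (if (j%:R * h <= x) && (x < (j%:R + 1) * h) then w j else 0).

(* Indices i = 1..m-1 are represented by i' : 'I_(m.-1) with i = i'.+1. *)
Definition Mstar (m : nat) (L : R) (w : nat -> R) : 'M[R]_(m.-1) :=
  let h := L / m%:R in
  \matrix_(i, k) (h^-1 * \int[@lebesgue_measure R]_(x in `[0, L])
                      (hat h i.+1 x * hat h k.+1 x * wh m h w x)).

Definition Sstar (m : nat) (L : R) : 'M[R]_(m.-1) :=
  let h := L / m%:R in
  \matrix_(i, k) (h * \int[@lebesgue_measure R]_(x in `[0, L])
                      (dhat h i.+1 x * dhat h k.+1 x)).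

Definition e1 (n : nat) : 'cV[R]_n := \col_(i < n) (if val i == 0%N then 1 else 0).

Definition first_comp {n : nat} (U : 'cV[R]_n) : R := ((e1 n)^T *m U) 0 0.

Definition enorm2 {n : nat} (U V : 'cV[R]_n) : R :=
  Num.sqrt (\sum_(i < n) (U i 0) ^+ 2 + \sum_(i < n) (V i 0) ^+ 2).

(* G(U,V) = (G1 V, G2 U) *)
Definition G1 (m : nat) (L : R) (w : nat -> R) (V : 'cV[R]_(m.-1)) : 'cV[R]_(m.-1) :=
  (L / m%:R)^-1 *: (invmx (Mstar m L w) *m V).

Definition G2 (m : nat) (L : R) (F : 'cV[R]_(m.-1)) (U : 'cV[R]_(m.-1)) : 'cV[R]_(m.-1) :=
  - ((L / m%:R)^-1 *: (Sstar m L *m U)) + F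
  + ((L / m%:R)^-1 * Num.max (first_comp U) 0) *: e1 (m.-1).

Definition CN_seq (m : nat) (L : R) (w : nat -> R) (F : 'cV[R]_(m.-1)) (T : R) (N : nat)
  (U0h V0h : 'cV[R]_(m.-1)) (Us Vs : nat -> 'cV[R]_(m.-1)) : Prop :=
  let dt := T / N%:R in
  Us 0%N = U0h /\ Vs 0%N = V0h /\
  forall n : nat, (n < N)%N ->
    dt^-1 *: (Us n.+1 - Us n) = 2^-1 *: (G1 m L w (Vs n.+1) + G1 m L w (Vs n)) /\
    dt^-1 *: (Vs n.+1 - Vs n) = 2^-1 *: (G2 m L F (Us n.+1) + G2 m L F (Us n)).

End Defs.

(* Main.v *)
Require Import Defs.
From HB Require Import structures.
From mathcomp Require Import all_boot all_order all_algebra.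
From mathcomp Require Import all_classical all_reals all_analysis.
From mathcomp Require Import ring lra.
Import Order.TTheory GRing.Theory Num.Theory.
Import numFieldNormedType.Exports.
Local Open Scope classical_set_scope.
Local Open Scope ring_scope.

Section Aux.
Context {R : realType} {k : nat}.
Implicit Types X Y : 'cV[R]_k.

Definition nm X : R := \sum_(i < k) `|X i 0|.

Lemma nm_ge0 X : 0 <= nm X.
Proof. by apply: sumr_ge0 => i _. Qed.

Lemma nmD X Y : nm (X + Y) <= nm X + nm Y.
Proof.
rewrite /nm -big_split /=; apply: ler_sum => i _; rewrite mxE; exact: ler_normD.
Qed.

Lemma nmN X : nm (- X) = nm X.
Proof. by apply: eq_bigr => i _; rewrite mxE normrN. Qed.

Lemma nmZ (a : R) X : nm (a *: X) = `|a| * nm X.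
Proof. by rewrite /nm mulr_sumr; apply: eq_bigr => i _; rewrite mxE normrM. Qed.

Lemma nmB X Y : nm (X - Y) <= nm X + nm Y.
Proof. by rewrite (le_trans (nmD _ _)) // nmN. Qed.

Lemma entry_le X i : `|X i 0| <= nm X.
Proof.
rewrite /nm (bigD1 i) //= lerDl; by apply: sumr_ge0 => j _.
Qed.

Lemma mul_bound (A : 'M[R]_k) : exists2 c, 0 <= c & forall X, nm (A *m X) <= c * nm X.
Proof.
exists (\sum_(i < k) \sum_(j < k) `|A i j|).
  by apply: sumr_ge0 => i _; apply: sumr_ge0.
move=> X; rewrite /nm mulr_suml; apply: ler_sum => i _; rewrite mxE.
apply: (le_trans (ler_norm_sum _ _ _)); rewrite mulr_suml; apply: ler_sum => j _.
rewrite normrM ler_wpM2l //; exact: entry_le.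
Qed.

Lemma comp_derive (f : R -> 'cV[R]_k) t d i :
  is_derive t (1:R) f d -> is_derive t (1:R) (fun s => f s i 0) (d i 0).
Proof.
case=> fd dE; apply: DeriveDef.
  exact: ((derivable_mxP f t 1).1 fd i 0).
by rewrite -dE derive_mx // mxE.
Qed.

Lemma comp_cont (A : set R) (f : R -> 'cV[R]_k) i :
  {within A, continuous f} -> {within A, continuous (fun s => f s i 0)}.
Proof.
move=> cf x; exact: (continuous_comp (cf x) (@coord_continuous _ _ _ i 0 _)).
Qed.


Lemma maxLip (a b : R) : `|Num.max a 0 - Num.max b 0| <= `|a - b|.
Proof.
have h1 := ler_norm (a - b); have h2 := ler_norm (b - a).
rewrite distrC in h2; rewrite ler_norml.
by case: (ltP a 0) => ha; case: (ltP b 0) => hb; apply/andP; split; lra.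
Qed.

Lemma lip_of_bound (f g : R -> 'cV[R]_k) a b B :
  {within `[a, b], continuous f} ->
  (forall x, x \in `]a, b[ -> is_derive x (1:R) f (g x)) ->
  (forall x, x \in `[a, b] -> nm (g x) <= B) ->
  forall x y, x \in `[a, b] -> y \in `[a, b] -> x <= y ->
  nm (f y - f x) <= k%:R * B * (y - x).
Proof.
move=> cf df gB x y xab yab xy.
have -> : k%:R * B * (y - x) = \sum_(i < k) (B * (y - x)).
  by rewrite sumr_const card_ord -mulrA mulr_natl.
apply: ler_sum => i _; rewrite !mxE.
move: xab yab; rewrite !in_itv /= => /andP[ax xb] /andP[ay yb].
have dxy : forall z, z \in `]x, y[ -> is_derive z (1:R) (fun s => f s i 0) (g z i 0).
  move=> z zxy; apply: comp_derive; apply: df.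
  by move: zxy; rewrite !in_itv /= => /andP[h1 h2]; apply/andP; split; lra.
have cxy' : {within `[x, y], continuous (fun s => f s i 0)}.
  apply: (continuous_subspaceW _ (comp_cont _ _ i cf)) => z /=.
  by rewrite !in_itv /= => /andP[h1 h2]; apply/andP; split; lra.
have [c cxy ->] := MVT_segment xy dxy cxy'.
rewrite normrM (@ger0_norm _ (y - x)) ?subr_ge0 // ler_wpM2r ?subr_ge0 //.
apply: le_trans (entry_le _ _) _; apply: gB.
by move: cxy; rewrite !in_itv /= => /andP[h1 h2]; apply/andP; split; lra.
Qed.

Lemma trunc (f p : R -> 'cV[R]_k) (Gf : 'cV[R]_k -> 'cV[R]_k) a b Lg D :
  a <= b -> 0 <= Lg -> 0 <= D ->
  {within `[a, b], continuous f} ->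
  (forall x, x \in `]a, b[ -> is_derive x (1:R) f (Gf (p x))) ->
  (forall x y, x \in `[a, b] -> y \in `[a, b] -> x <= y -> nm (p y - p x) <= D * (y - x)) ->
  (forall X Y, nm (Gf X - Gf Y) <= Lg * nm (X - Y)) ->
  nm (f b - f a - ((b - a) / 2) *: (Gf (p a) + Gf (p b))) <= k%:R * (Lg * D) * (b - a) ^+ 2.
Proof.
move=> ab Lg0 D0 cf df pL GL.
have -> : k%:R * (Lg * D) * (b - a) ^+ 2 = \sum_(i < k) (Lg * D * (b - a) ^+ 2).
  by rewrite sumr_const card_ord -!mulrA mulr_natl.
apply: ler_sum => i _; rewrite !mxE.
have dab : forall z, z \in `]a, b[ -> is_derive z (1:R) (fun s => f s i 0) (Gf (p z) i 0).
  by move=> z zab; apply: comp_derive; apply: df.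
have [c cab E] := MVT_segment ab dab (comp_cont _ _ i cf).
have aab : a \in `[a, b] by rewrite in_itv /= lexx ab.
have bab : b \in `[a, b] by rewrite in_itv /= lexx ab andbT.
move: (cab); rewrite in_itv /= => /andP[ac cb].
have h1 : `|Gf (p c) i 0 - Gf (p a) i 0| <= Lg * D * (b - a).
  have := entry_le (Gf (p c) - Gf (p a)) i; rewrite !mxE => /le_trans; apply.
  apply: (le_trans (GL _ _)); rewrite -mulrA ler_wpM2l //.
  apply: (le_trans (pL _ _ aab cab ac)); rewrite ler_wpM2l //; lra.
have h2 : `|Gf (p b) i 0 - Gf (p c) i 0| <= Lg * D * (b - a).
  have := entry_le (Gf (p b) - Gf (p c)) i; rewrite !mxE => /le_trans; apply.
  apply: (le_trans (GL _ _)); rewrite -mulrA ler_wpM2l //.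
  apply: (le_trans (pL _ _ cab bab cb)); rewrite ler_wpM2l //; lra.
have -> : f b i 0 - f a i 0 - (b - a) / 2 * (Gf (p a) i 0 + Gf (p b) i 0) =
   (b - a) / 2 * ((Gf (p c) i 0 - Gf (p a) i 0) - (Gf (p b) i 0 - Gf (p c) i 0)).
  by rewrite E; field.
rewrite normrM ger0_norm; last by apply: divr_ge0; lra.
apply: (le_trans (ler_wpM2l _ (ler_normB _ _))); first by apply: divr_ge0; lra.
have h3 : 0 <= b - a by lra.
set X := `|_| in h1; set Y := `|_| in h2.
have : (b - a) / 2 * (X + Y) <= (b - a) / 2 * (2 * (Lg * D * (b - a))).
  by apply: ler_wpM2l; [apply: divr_ge0; lra | lra].
have -> : (b - a) / 2 * (2 * (Lg * D * (b - a))) = Lg * D * (b - a) ^+ 2.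
  by field.
done.
Qed.

Lemma gronwall (e : nat -> R) (N : nat) (q r : R) :
  e 0%N = 0 -> (forall n, 0 <= e n) -> 0 <= q -> q <= 1/2 -> 0 <= r ->
  (forall n, (n < N)%N -> e n.+1 <= e n + q * (e n.+1 + e n) + r) ->
  forall n, (n <= N)%N -> e n <= 2 * r * n%:R * (1 + 4 * q) ^+ n.
Proof.
move=> e0 ege q0 q1 r0 rec; elim=> [|n IH] hn; first by rewrite e0 mulr0 mul0r.
have hn' : (n < N)%N by [].
have := rec n hn'; have := IH (ltnW hn').
set s := (1 + 4 * q); set X := s ^+ n.
have X1 : 1 <= X by rewrite /X exprn_ege1 // /s; lra.
rewrite exprS -/X mulrC (mulrC s) -/X.
have := ege n; have := ege n.+1.
set en := e n; set en1 := e n.+1.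
rewrite -[n.+1]addn1 natrD.
set nn := n%:R.
have nn0 : 0 <= nn by exact: ler0n.
move=> h1 h2 h3 h4.
have hs : (1 - q) * s >= 1 + q by rewrite /s; nra.
have A : (1 - q) * en1 <= (1 + q) * (2 * r * nn * X) + r.
  have : (1 + q) * en <= (1 + q) * (2 * r * nn * X) by apply: ler_wpM2l; lra.
  lra.
have P : 0 <= 2 * r * (nn + 1) * X.
  by rewrite !mulr_ge0 //; lra.
have B1 : (1 + q) * (2 * r * (nn + 1) * X) <= (1 - q) * s * (2 * r * (nn + 1) * X).
  by apply: ler_wpM2r.
have B2 : r <= (1 + q) * (2 * r * X).
  have : r * 1 <= r * ((1 + q) * (2 * X)) by apply: ler_wpM2l => //; nra.
  by rewrite mulr1 => /le_trans; apply; rewrite le_eqVlt; apply/orP; left; apply/eqP; ring.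
have B : (1 + q) * (2 * r * nn * X) + r <= (1 - q) * (2 * r * (nn + 1) * (X * s)).
  have -> : (1 - q) * (2 * r * (nn + 1) * (X * s)) = (1 - q) * s * (2 * r * (nn + 1) * X) by ring.
  apply: le_trans B1; have -> : (1 + q) * (2 * r * (nn + 1) * X) = (1 + q) * (2 * r * nn * X) + (1 + q) * (2 * r * X) by ring.
  lra.
have q2 : 0 < 1 - q by lra.
by rewrite -(ler_pM2l q2); apply: le_trans A B.
Qed.

End Aux.

Section Aux2.
Context {R : realType}.

Lemma fc_lip (n : nat) (U U' : 'cV[R]_n) :
  `|first_comp U - first_comp U'| <= nm (U - U').
Proof.
have -> : first_comp U - first_comp U' = first_comp (U - U').
  by rewrite /first_comp mulmxBr [in RHS]mxE [in X in _ = _ + X]mxE.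
rewrite /first_comp mxE.
apply: (le_trans (ler_norm_sum _ _ _)); apply: ler_sum => j _.
rewrite normrM !mxE; case: ifP => _; rewrite ?normr1 ?normr0 ?mul1r ?mul0r //.
Qed.

Lemma G_lip (m : nat) (L : R) w F : exists2 Lg : R, 0 <= Lg &
  (forall V V', nm (G1 m L w V - G1 m L w V') <= Lg * nm (V - V')) /\
  (forall U U', nm (G2 m L F U - G2 m L F U') <= Lg * nm (U - U')).
Proof.
have [c1 c10 H1] := mul_bound (invmx (Mstar m L w)).
have [c2 c20 H2] := mul_bound (Sstar m L).
set h := (L / m%:R)^-1.
have e0 := nm_ge0 (e1 (m.-1) : 'cV[R]_(m.-1)).
exists (`|h| * c1 + `|h| * c2 + `|h| * nm (e1 (m.-1))).
  by rewrite !addr_ge0 // mulr_ge0.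
split.
- move=> V V'; rewrite /G1 -/h -scalerBr -mulmxBr nmZ.
  apply: (le_trans (ler_wpM2l _ (H1 _))) => //.
  have := nm_ge0 (V - V'); rewrite mulrA; move=> hv.
  apply: ler_wpM2r => //.
  by rewrite -addrA lerDl addr_ge0 // mulr_ge0.
- move=> U U'.
  have -> : G2 m L F U - G2 m L F U' = - (h *: (Sstar m L *m (U - U'))) +
      (h * (Num.max (first_comp U) 0 - Num.max (first_comp U') 0)) *: e1 (m.-1).
    rewrite /G2 -/h mulmxBr scalerBr mulrBr scalerBl.
    by apply/matrixP => i j; rewrite !mxE; ring.
  apply: (le_trans (nmD _ _)); rewrite nmN !nmZ normrM.
  have hv := nm_ge0 (U - U').
  have A : `|h| * nm (Sstar m L *m (U - U')) <= `|h| * c2 * nm (U - U').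
    by rewrite -mulrA; apply: ler_wpM2l.
  have B : `|h| * `|Num.max (first_comp U) 0 - Num.max (first_comp U') 0| * nm (e1 m.-1)
      <= `|h| * nm (e1 m.-1) * nm (U - U').
    rewrite mulrAC; apply: ler_wpM2l; first by rewrite mulr_ge0.
    apply: le_trans; first exact: maxLip. exact: fc_lip.
  have C : 0 <= `|h| * c1 * nm (U - U') by rewrite !mulr_ge0.
  rewrite !mulrDl; lra.
Qed.

Lemma bound_comp (n : nat) (f : R -> 'cV[R]_n) (T : R) : 0 <= T ->
  {within `[0, T], continuous f} -> exists B, forall t, t \in `[0, T] -> nm (f t) <= B.
Proof.
move=> T0 cf.
have H : forall i : 'I_n, exists c : R, forall t, t \in `[0, T] -> `|f t i 0| <= c.
  move=> i.
  have ci : {within `[0, T], continuous (fun t => `|f t i 0|)}.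
    move=> x; exact: (continuous_comp (comp_cont _ _ i cf x) (@norm_continuous _ _ _)).
  have [c _ hc] := EVT_max T0 ci.
  by exists `|f c i 0|.
have [g hg] := fin_all_exists H.
exists (\sum_(i < n) g i) => t ht; apply: ler_sum => i _; exact: hg.
Qed.

Lemma step (n : nat) (X0 X1 S0 S1 Y0 Y1 Z0 Z1 : 'cV[R]_n) (G : 'cV[R]_n -> 'cV[R]_n)
    (dt Lg c : R) :
  0 < dt -> 0 <= Lg ->
  (forall X Y, nm (G X - G Y) <= Lg * nm (X - Y)) ->
  dt^-1 *: (S1 - S0) = 2^-1 *: (G Z1 + G Z0) ->
  nm (X1 - X0 - (dt / 2) *: (G Y0 + G Y1)) <= c ->
  nm (X1 - S1) <= nm (X0 - S0) + c + dt / 2 * Lg * (nm (Y1 - Z1) + nm (Y0 - Z0)).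
Proof.
move=> dt0 Lg0 GL hS hX.
have hS' : S1 = S0 + (dt / 2) *: (G Z1 + G Z0).
  have := congr1 (fun v => dt *: v) hS; rewrite !scalerA mulfV ?gt_eqF // scale1r.
  by move=> <-; rewrite addrC subrK.
have -> : X1 - S1 = (X0 - S0) + (X1 - X0 - (dt / 2) *: (G Y0 + G Y1))
     + (dt / 2) *: ((G Y1 - G Z1) + (G Y0 - G Z0)).
  by rewrite hS'; apply/matrixP => i j; rewrite !mxE; ring.
apply: (le_trans (nmD _ _)); apply: lerD.
  by apply: (le_trans (nmD _ _)); apply: lerD.
rewrite nmZ ger0_norm; last by apply: divr_ge0; lra.
rewrite -mulrA; apply: ler_wpM2l; first by apply: divr_ge0; lra.
rewrite mulrDr; apply: (le_trans (nmD _ _)); apply: lerD; exact: GL.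
Qed.

Lemma enorm_le (n : nat) (X Y : 'cV[R]_n) : enorm2 X Y <= nm X + nm Y.
Proof.
rewrite /enorm2.
have hX := nm_ge0 X; have hY := nm_ge0 Y.
set e := nm X + nm Y.
have e0 : 0 <= e by rewrite addr_ge0.
rewrite -(ger0_norm e0) -sqrtr_sqr ler_sqrt ?sqr_ge0 //.
have aux : forall Z : 'cV[R]_n, nm Z <= e -> \sum_(i < n) Z i 0 ^+ 2 <= e * nm Z.
  move=> Z hZ; rewrite /nm mulr_sumr; apply: ler_sum => i _.
  have -> : Z i 0 ^+ 2 = `|Z i 0| * `|Z i 0|.
    by rewrite -normrM -expr2 ger0_norm ?sqr_ge0.
  apply: ler_wpM2r => //.
  exact: le_trans (entry_le _ _) hZ.
have -> : e ^+ 2 = e * nm X + e * nm Y by rewrite expr2 -mulrDr.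
apply: lerD; apply: aux; rewrite /e; lra.
Qed.

End Aux2.

Theorem lemma3p1 (R : realType) (m : nat) (L T : R) (w : nat -> R)
  (F U0 V0 : 'cV[R]_(m.-1)) (Uh Vh : R -> 'cV[R]_(m.-1)) :
  (1 < m)%N -> 0 < L -> 0 < T -> w 0%N = 0 ->
  Mstar m L w \in unitmx ->
  {within `[0, T], continuous Uh} -> {within `[0, T], continuous Vh} ->
  (forall t, t \in `]0, T[ ->
     is_derive t 1 Uh (G1 m L w (Vh t)) /\ is_derive t 1 Vh (G2 m L F (Uh t))) ->
  Uh 0 = U0 -> Vh 0 = V0 ->
  exists delta K : R, 0 < delta /\ 0 < K /\
    forall N : nat, (0 < N)%N -> T / N%:R < delta ->
    forall Us Vs : nat -> 'cV[R]_(m.-1),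
      CN_seq m L w F T N (Uh 0) (Vh 0) Us Vs ->
      forall n : nat, (n <= N)%N ->
        enorm2 (Uh (n%:R * (T / N%:R)) - Us n) (Vh (n%:R * (T / N%:R)) - Vs n)
          <= K * (T / N%:R).
Proof.
move=> m1 L0 T0 w0 Mu cU cV dUV _ _.
have T0' : 0 <= T := ltW T0.
have [Lg Lg0 [L1 L2]] := G_lip m L w F.
have [BU hBU] := bound_comp _ Uh T (ltW T0) cU.
have [BV hBV] := bound_comp _ Vh T (ltW T0) cV.
have T0in : 0 \in `[0, T] by rewrite in_itv /= lexx ltW.
set B1 := nm (G1 m L w 0) + Lg * BV.
set B2 := nm (G2 m L F 0) + Lg * BU.
have hB1 : forall t, t \in `[0, T] -> nm (G1 m L w (Vh t)) <= B1.
  move=> t ht; have := L1 (Vh t) 0; rewrite subr0 => h.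
  have := nmD (G1 m L w (Vh t) - G1 m L w 0) (G1 m L w 0); rewrite subrK => h'.
  apply: (le_trans h'); rewrite /B1 addrC lerD2l.
  apply: (le_trans h); apply: ler_wpM2l => //; exact: hBV.
have hB2 : forall t, t \in `[0, T] -> nm (G2 m L F (Uh t)) <= B2.
  move=> t ht; have := L2 (Uh t) 0; rewrite subr0 => h.
  have := nmD (G2 m L F (Uh t) - G2 m L F 0) (G2 m L F 0); rewrite subrK => h'.
  apply: (le_trans h'); rewrite /B2 addrC lerD2l.
  apply: (le_trans h); apply: ler_wpM2l => //; exact: hBU.
have B10 : 0 <= B1 := le_trans (nm_ge0 _) (hB1 _ T0in).
have B20 : 0 <= B2 := le_trans (nm_ge0 _) (hB2 _ T0in).
have lipU := lip_of_bound Uh (fun t => G1 m L w (Vh t)) 0 T B1 cU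
  (fun x hx => (dUV x hx).1) hB1.
have lipV := lip_of_bound Vh (fun t => G2 m L F (Uh t)) 0 T B2 cV
  (fun x hx => (dUV x hx).2) hB2.
set DU := (m.-1)%:R * B1.
set DV := (m.-1)%:R * B2.
have DU0 : 0 <= DU by rewrite mulr_ge0.
have DV0 : 0 <= DV by rewrite mulr_ge0.
set C := (m.-1)%:R * (Lg * (DU + DV)).
have C0 : 0 <= C by rewrite !mulr_ge0 // addr_ge0.
have subab : forall a b, 0 <= a -> b <= T -> `[a, b] `<=` `[0, T].
  move=> a b a0 bT x /=; rewrite !in_itv /= => /andP[h1 h2].
  by apply/andP; split; lra.
have subab' : forall a b, 0 <= a -> b <= T -> forall x, x \in `]a, b[ -> x \in `]0, T[.
  move=> a b a0 bT x; rewrite !in_itv /= => /andP[h1 h2].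
  by apply/andP; split; lra.
have memab : forall a b x, 0 <= a -> b <= T -> x \in `[a, b] -> x \in `[0, T].
  move=> a b x a0 bT; rewrite !in_itv /= => /andP[h1 h2].
  by apply/andP; split; lra.
have truncU : forall a b, 0 <= a -> a <= b -> b <= T ->
    nm (Uh b - Uh a - ((b - a) / 2) *: (G1 m L w (Vh a) + G1 m L w (Vh b)))
      <= C * (b - a) ^+ 2.
  move=> a b a0 ab bT.
  apply: (le_trans (trunc Uh Vh (G1 m L w) a b Lg DV ab Lg0 DV0 _ _ _ L1)).
  - exact: (continuous_subspaceW (subab a b a0 bT) cU).
  - by move=> x hx; apply: (dUV x (subab' a b a0 bT x hx)).1.
  - move=> x y hx hy xy; apply: lipV => //; exact: (memab a b).
  - apply: ler_wpM2r; first exact: sqr_ge0.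
    rewrite /C; apply: ler_wpM2l => //; apply: ler_wpM2l => //; lra.
have truncV : forall a b, 0 <= a -> a <= b -> b <= T ->
    nm (Vh b - Vh a - ((b - a) / 2) *: (G2 m L F (Uh a) + G2 m L F (Uh b)))
      <= C * (b - a) ^+ 2.
  move=> a b a0 ab bT.
  apply: (le_trans (trunc Vh Uh (G2 m L F) a b Lg DU ab Lg0 DU0 _ _ _ L2)).
  - exact: (continuous_subspaceW (subab a b a0 bT) cV).
  - by move=> x hx; apply: (dUV x (subab' a b a0 bT x hx)).2.
  - move=> x y hx hy xy; apply: lipU => //; exact: (memab a b).
  - apply: ler_wpM2r; first exact: sqr_ge0.
    rewrite /C; apply: ler_wpM2l => //; apply: ler_wpM2l => //; lra.
set E := expR (2 * Lg * T).
have E0 : 0 <= E := expR_ge0 _.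
exists (1 / (Lg + 1)), (4 * C * T * E + 1).
split; first by apply: divr_gt0; lra.
have K0 : 0 < 4 * C * T * E + 1.
  have : 0 <= 4 * C * T * E by rewrite !mulr_ge0 // ?addr_ge0.
  lra.
split; first exact: K0.
move=> N N0 dtlt Us Vs [hU0 [hV0 hCN]] n nN.
set dt := T / N%:R.
have Npos : 0 < N%:R :> R by rewrite ltr0n.
have dt0 : 0 < dt by rewrite /dt divr_gt0.
have dt0' : 0 <= dt := ltW dt0.
have NdtT : N%:R * dt = T by rewrite /dt; field; rewrite gt_eqF.
set t := fun j : nat => j%:R * dt.
have tin : forall j, (j <= N)%N -> 0 <= t j /\ t j <= T.
  move=> j jN; split; first by rewrite /t mulr_ge0 //.
  by rewrite /t -NdtT ler_pM2r // ler_nat.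
have tS : forall j, t j.+1 - t j = dt.
  by move=> j; rewrite /t -addn1 natrD; ring.
have tle : forall j, t j <= t j.+1 by move=> j; have := tS j; lra.
set e := fun j => nm (Uh (t j) - Us j) + nm (Vh (t j) - Vs j).
have nm0 : nm (0 : 'cV[R]_(m.-1)) = 0.
  by rewrite /nm big1 // => i _; rewrite mxE normr0.
have e0 : e 0%N = 0 by rewrite /e /t mul0r hU0 hV0 !subrr nm0 addr0.
have ege : forall j, 0 <= e j by move=> j; rewrite addr_ge0 ?nm_ge0.
set q := dt / 2 * Lg.
set r := 2 * (C * dt ^+ 2).
have q0 : 0 <= q by rewrite /q mulr_ge0 // divr_ge0 //.
have q1 : q <= 1 / 2.
  have : dt * (Lg + 1) < 1 by rewrite -ltr_pdivlMr //; lra.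
  rewrite /q; nra.
have r0 : 0 <= r by rewrite /r mulr_ge0 // mulr_ge0 // sqr_ge0.
have rec : forall j, (j < N)%N -> e j.+1 <= e j + q * (e j.+1 + e j) + r.
  move=> j hj; have [cnU cnV] := hCN j hj.
  have [tj0 tjT] := tin j (ltnW hj).
  have [tj10 tj1T] := tin j.+1 hj.
  have tU := truncU (t j) (t j.+1) tj0 (tle j) tj1T; rewrite tS in tU.
  have tV := truncV (t j) (t j.+1) tj0 (tle j) tj1T; rewrite tS in tV.
  have hu := step _ _ _ _ _ _ _ _ _ _ _ _ _ dt0 Lg0 L1 cnU tU.
  have hv := step _ _ _ _ _ _ _ _ _ _ _ _ _ dt0 Lg0 L2 cnV tV.
  rewrite /e /q /r; lra.
have gr := gronwall e N q r e0 ege q0 q1 r0 rec n nN.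
apply: (le_trans (enorm_le _ _ _)); rewrite -/(t n) -/(e n).
apply: (le_trans gr).
have nd : n%:R * dt <= T by have := tin n nN; rewrite /t; case.
have hs : (1 + 4 * q) ^+ n <= E.
  apply: (le_trans (y := expR (4 * q) ^+ n)).
    apply: lerXn2r; rewrite ?nnegrE ?expR_ge0 //; first lra.
    exact: expR_ge1Dx.
  rewrite -expRM_natl /E ler_expR /q.
  have -> : n%:R * (4 * (dt / 2 * Lg)) = 2 * Lg * (n%:R * dt) by field.
  by apply: ler_wpM2l => //; rewrite mulr_ge0.
have n0 : 0 <= n%:R :> R by exact: ler0n.
have A : 2 * r * n%:R * (1 + 4 * q) ^+ n <= 2 * r * n%:R * E.
  by apply: ler_wpM2l hs; apply: mulr_ge0 => //; apply: mulr_ge0.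
apply: (le_trans A).
have -> : 2 * r * n%:R * E = (4 * C * dt * E) * (n%:R * dt) by rewrite /r; ring.
have P : 0 <= 4 * C * dt * E by rewrite !mulr_ge0 // ?addr_ge0.
apply: (le_trans (ler_wpM2l P nd)).
have -> : 4 * C * dt * E * T = (4 * C * T * E) * dt by ring.
by rewrite ler_pM2r // lerDl.
Qed.
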